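(* In the standing setup, suppose $\gamma$ is diagonalisable over $k$ and $\mathcal L$ is a subgroup of $k^\times$. Then the coordinate ring $k[C^{(\mathcal L)}_{\mathbf G}(\gamma)]$ is the maximal quotient algebra of $k[\mathbf G]$ on which all eigenvalues of $\gamma$ lie in $\mathcal L$; that is, $C^{(\mathcal L)}_{\mathbf G}(\gamma)$ is the closed subscheme of $\mathbf G$ defined by the ideal of $k[\mathbf G]$ generated by all eigenvectors of $\gamma$ in $k[\mathbf G]$ whose eigenvalues lie outside $\mathcal L$.
   Context: Standing setup: $\mathbf G$ an affine algebraic group over a field $k$ (not necessarily smooth or connected) with a faithful finite-dimensional representation $\mathbf G\to\mathrm{GL}(\mathbf V)$; $\gamma\in N_{\mathrm{GL}(V)}(\mathbf G)(k)$ diagonalisable ($\gamma$ need not lie in $G$); $\gamma$ acts on $k[\mathbf G]$ through its conjugation action on $\mathbf G$. For a subgroup $\mathcal L\subseteq k^\times$, the $\mathcal L$-close $\lambda$-eigenspace of $\gamma$ in $\mathbf V$ is the sum of the eigenspaces with eigenvalues in $\lambda\mathcal L$; $C^{(\mathcal L)}_{\mathrm{GL}(\mathbf V)}(\gamma)$ is the subgroup of $\mathrm{GL}(\mathbf V)$ stabilising every $\mathcal L$-close eigenspace of $\gamma$, and $C^{(\mathcal L)}_{\mathbf G}(\gamma)=\mathbf G\cap C^{(\mathcal L)}_{\mathrm{GL}(\mathbf V)}(\gamma)$ (scheme-theoretic intersection). *)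

(* Defs.v *)
From HB Require Import structures.
From mathcomp Require Import all_boot all_algebra.
From mathcomp Require Import mpoly.
Set Implicit Arguments. Unset Strict Implicit. Unset Printing Implicit Defensive.
Import GRing.Theory.
Local Open Scope ring_scope.

Definition ideal_gen (R : comNzRingType) (S : R -> Prop) : R -> Prop :=
  fun f => exists s : seq (R * R),
      (forall p, p \in s -> S p.2) /\ f = \sum_(p <- s) p.1 * p.2.

Definition is_ideal (R : comNzRingType) (I : R -> Prop) : Prop :=
  [/\ I 0, (forall f g, I f -> I g -> I (f + g)) & (forall r f, I f -> I (r * f))].

(* Coordinate ring of GL_n over k:  k[GL_n] = k[x_ij, t]/(t det(x) - 1).
   Variables are indexed by  option ('I_n * 'I_n):  Some (i,j) is x_ij,
   None is t = det^{-1}.  We work in the polynomial ring P = k[x_ij, t]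
   and represent closed subschemes of GL_n by ideals of P containing
   t det(x) - 1. *)

Definition vT (n : nat) := option ('I_n * 'I_n).
Definition nV (n : nat) := #|{: vT n}|.
Definition Pol (k : fieldType) (n : nat) := {mpoly k[nV n]}.

Section GLCoords.
Variables (k : fieldType) (n : nat).

Definition var (v : vT n) : Pol k n := 'X_(enum_rank v).
Definition xv (i j : 'I_n) : Pol k n := var (Some (i, j)).
Definition tv : Pol k n := var None.

Definition Xmat : 'M[Pol k n]_n := \matrix_(i, j) xv i j.

Definition Cmat (p q : nat) (A : 'M[k]_(p, q)) : 'M[Pol k n]_(p, q) :=
  map_mx (@mpolyC (nV n) k) A.

Definition GLrel : Pol k n := tv * \det Xmat - 1.

Definition substv (M : nat) (H : vT n -> {mpoly k[M]}) (p : Pol k n)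
  : {mpoly k[M]} :=
  mmap (@mpolyC M k) (fun a => H (enum_val a)) p.

(* P (x) P  as a polynomial ring in two copies of the variables *)
Definition nV2 := #|{: (vT n + vT n)%type}|.
Definition Pol2 := {mpoly k[nV2]}.
Definition varL (v : vT n) : Pol2 := 'X_(enum_rank (inl v : (vT n + vT n)%type)).
Definition varR (v : vT n) : Pol2 := 'X_(enum_rank (inr v : (vT n + vT n)%type)).
Definition inL (p : Pol k n) : Pol2 := substv varL p.
Definition inR (p : Pol k n) : Pol2 := substv varR p.

Definition comult (p : Pol k n) : Pol2 :=
  substv (fun v => match v with
                   | Some (i, j) => \sum_(l < n) varL (Some (i, l)) * varR (Some (l, j))
                   | None => varL None * varR None
                   end) p.

Definition antipode (p : Pol k n) : Pol k n :=
  substv (fun v => match v with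
                   | Some (i, j) => tv * (\adj Xmat) i j
                   | None => \det Xmat
                   end) p.

Definition counit (p : Pol k n) : k :=
  p.@[fun a => match enum_val a with
               | Some (i, j) => (i == j)%:R
               | None => 1
               end].

(* An ideal I of P = k[x_ij,t] defines a closed subgroup scheme of GL_n
   (i.e. G together with its faithful representation G -> GL(V), V = k^n):
   I contains t det - 1 and is a Hopf ideal. *)
Definition closed_subgroup_ideal (I : Pol k n -> Prop) : Prop :=
  [/\ is_ideal I, I GLrel,
      (forall f, I f ->
         ideal_gen (fun g => exists h, I h /\ (g = inL h \/ g = inR h)) (comult f)),
      (forall f, I f -> I (antipode f)) &
      (forall f, I f -> counit f = 0)].

(* Action of gamma in GL_n(k) on P (hence on k[G]) through conjugation:
   (gamma . f)(g) = f(gamma^-1 g gamma). *)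
Definition conj_act (gamma : 'M[k]_n) (f : Pol k n) : Pol k n :=
  substv (fun v => match v with
                   | Some (i, j) => (Cmat (invmx gamma) *m Xmat *m Cmat gamma) i j
                   | None => tv
                   end) f.

Definition normalises (gamma : 'M[k]_n) (I : Pol k n -> Prop) : Prop :=
  gamma \in unitmx /\
  (forall f, I f -> I (conj_act gamma f) /\ I (conj_act (invmx gamma) f)).

Definition subgroup_units (L : k -> Prop) : Prop :=
  [/\ (forall x, L x -> x != 0), L 1,
      (forall x y, L x -> L y -> L (x * y)) & (forall x, L x -> L x^-1)].

Definition Lclose_eigsp (L : k -> Prop) (gamma : 'M[k]_n) (lam : k)
    (w : 'cV[k]_n) : Prop :=
  exists s : seq (k * 'cV[k]_n),
    (forall p, p \in s ->
        (exists mu, L mu /\ p.1 = lam * mu) /\ gamma *m p.2 = p.1 *: p.2)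
    /\ w = \sum_(p <- s) p.2.

(* Generators of the ideal defining C^{(L)}_{GL(V)}(gamma): for each
   L-close eigenspace W, each w in W and each linear form phi vanishing on W,
   the function g |-> phi(g w).  (g stabilises W iff all these vanish.) *)
Definition CGL_gens (L : k -> Prop) (gamma : 'M[k]_n) (f : Pol k n) : Prop :=
  exists (lam : k) (w : 'cV[k]_n) (phi : 'rV[k]_n),
    [/\ Lclose_eigsp L gamma lam w,
        (forall u, Lclose_eigsp L gamma lam u -> phi *m u = 0) &
        f = (Cmat phi *m Xmat *m Cmat w) ord0 ord0].

(* f (mod I) is an eigenvector of gamma in k[G] = P/I whose eigenvalue
   lies outside L. *)
Definition eigvec_outside (L : k -> Prop) (gamma : 'M[k]_n)
    (I : Pol k n -> Prop) (f : Pol k n) : Prop :=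
  exists lam : k, [/\ ~ L lam, ~ I f & I (conj_act gamma f - lam *: f)].

End GLCoords.

(* Main.v *)
Require Import Defs.
From HB Require Import structures.
From mathcomp Require Import all_boot all_algebra.
From mathcomp Require Import mpoly.
From Stdlib Require Import Classical.
Set Implicit Arguments. Unset Strict Implicit. Unset Printing Implicit Defensive.
Import GRing.Theory.
Local Open Scope ring_scope.

Section Ideals.
Variable R : comNzRingType.
Implicit Types (S T : R -> Prop).

Lemma ig_gen S g : S g -> ideal_gen S g.
Proof. by move=> Sg; exists [:: (1, g)]; split=> [p|]; rewrite ?inE ?big_seq1 ?mul1r // => /eqP ->. Qed.

Lemma ig0 S : ideal_gen S 0.
Proof. by exists [::]; rewrite big_nil. Qed.

Lemma igD S f g : ideal_gen S f -> ideal_gen S g -> ideal_gen S (f + g).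
Proof.
move=> [s [Hs ->]] [t [Ht ->]]; exists (s ++ t); split; last by rewrite big_cat.
by move=> p; rewrite mem_cat => /orP [/Hs|/Ht].
Qed.

Lemma igM S r f : ideal_gen S f -> ideal_gen S (r * f).
Proof.
move=> [s [Hs ->]]; exists [seq (r * p.1, p.2) | p <- s]; split.
  by move=> p /mapP [q /Hs Hq ->].
by rewrite big_map mulr_sumr; apply: eq_bigr => p _; rewrite mulrA.
Qed.

Lemma igN S f : ideal_gen S f -> ideal_gen S (- f).
Proof. by move=> /(igM (-1)); rewrite mulN1r. Qed.

Lemma igB S f g : ideal_gen S f -> ideal_gen S g -> ideal_gen S (f - g).
Proof. by move=> Hf /igN; apply: igD. Qed.

Lemma ig_sum S (I : eqType) (r : seq I) (F : I -> R) :
  (forall i, i \in r -> ideal_gen S (F i)) -> ideal_gen S (\sum_(i <- r) F i).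
Proof.
elim: r => [|a r IH] H; first by rewrite big_nil; apply: ig0.
rewrite big_cons; apply: igD; first by apply: H; rewrite inE eqxx.
by apply: IH => i Hi; apply: H; rewrite inE Hi orbT.
Qed.

Lemma ig_trans S T f : (forall g, S g -> ideal_gen T g) ->
  ideal_gen S f -> ideal_gen T f.
Proof.
move=> ST [s [Hs ->]]; apply: ig_sum => p /Hs /ST; exact: igM.
Qed.

Lemma ig_morph S (h : {rmorphism R -> R}) f :
  (forall g, S g -> ideal_gen S (h g)) -> ideal_gen S f -> ideal_gen S (h f).
Proof.
move=> Sh [s [Hs ->]]; rewrite rmorph_sum; apply: ig_sum => p /Hs /Sh Hp.
by rewrite rmorphM; apply: igM.
Qed.
End Ideals.
Lemma grp4 (V : zmodType) (u v w x : V) : u - v - (x - w) = u - x - (v - w).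
Proof. by rewrite !opprB addrACA [RHS]addrACA [- x + _]addrC. Qed.
Lemma grp3 (V : zmodType) (a b c : V) : a - b - (a - c) = c - b.
Proof. by rewrite opprB addrC addrA subrK. Qed.

Lemma grp5 (V : zmodType) (u v w x : V) : (u + v) - (w + x) - (u - w) = v - x.
Proof. by rewrite [- (w + x)]opprD addrACA [_ + (v - x) - _]addrAC subrr add0r. Qed.

Section Subst.
Variables (k : fieldType) (n : nat) (H : vT n -> Pol k n).
Lemma substv_var v : substv H (var k v) = H v.
Proof. by rewrite /substv /var mmapX mmap1U enum_rankK. Qed.
Lemma substvC c : substv H c%:MP = c%:MP.
Proof. by rewrite /substv mmapC. Qed.
Lemma substvZ c p : substv H (c *: p) = c *: substv H p.
Proof. by rewrite /substv mmapZ mul_mpolyC. Qed.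
Lemma substvD p q : substv H (p + q) = substv H p + substv H q.
Proof. exact: rmorphD. Qed.
Lemma substvM p q : substv H (p * q) = substv H p * substv H q.
Proof. exact: rmorphM. Qed.
Lemma substvB p q : substv H (p - q) = substv H p - substv H q.
Proof. exact: rmorphB. Qed.
Lemma substv1 : substv H 1 = 1.
Proof. exact: rmorph1. Qed.
Lemma substv_sum (I0 : Type) (r : seq I0) (F : I0 -> Pol k n) :
  substv H (\sum_(i <- r) F i) = \sum_(i <- r) substv H (F i).
Proof. exact: rmorph_sum. Qed.
End Subst.

Section Forms.
Variables (k : fieldType) (n : nat).
Local Notation P := (Pol k n).

Lemma form_expand p m m' q (u : 'M[k]_(p, m)) (M : 'M[P]_(m, m')) (v : 'M[k]_(m', q)) i j :
  (Cmat n u *m M *m Cmat n v) i j = \sum_b \sum_a (u i a * v b j) *: M a b.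
Proof.
rewrite mxE; apply: eq_bigr => b _; rewrite mxE mulr_suml; apply: eq_bigr => a _.
by rewrite !mxE mulrAC -mpolyCM mul_mpolyC.
Qed.

Lemma Cmat_mul p m q (A : 'M[k]_(p, m)) (B : 'M[k]_(m, q)) :
  Cmat n (A *m B) = Cmat n A *m Cmat n B.
Proof. exact: map_mxM. Qed.

Lemma Cmat1 : Cmat n (1%:M : 'M[k]_n) = 1%:M.
Proof. exact: map_mx1. Qed.

Variable gamma : 'M[k]_n.
Definition sigH (v : vT n) : P := match v with
                   | Some (i, j) => (Cmat n (invmx gamma) *m Xmat k n *m Cmat n gamma) i j
                   | None => tv k n
                   end.
Local Notation sig := (substv sigH).
Lemma conj_actE f : conj_act gamma f = sig f. Proof. by []. Qed.

Lemma sig_C p q (A : 'M[k]_(p, q)) : map_mx sig (Cmat n A) = Cmat n A.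
Proof. by apply/matrixP => i j; rewrite !mxE substvC. Qed.

Lemma sig_X : map_mx sig (Xmat k n) = Cmat n (invmx gamma) *m Xmat k n *m Cmat n gamma.
Proof.
by apply/matrixP => i j; rewrite [LHS]mxE [Xmat k n i j]mxE /xv substv_var.
Qed.

Lemma sig_form (u : 'rV[k]_n) (v : 'cV[k]_n) :
  sig ((Cmat n u *m Xmat k n *m Cmat n v) ord0 ord0) =
  (Cmat n (u *m invmx gamma) *m Xmat k n *m Cmat n (gamma *m v)) ord0 ord0.
Proof.
transitivity ((map_mx sig (Cmat n u *m Xmat k n *m Cmat n v)) ord0 ord0).
  by rewrite [RHS]mxE.
rewrite !(map_mxM (substv sigH)).
rewrite !sig_C sig_X !Cmat_mul.
by rewrite !mulmxA.
Qed.
End Forms.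
Section Diag.
Variables (k : fieldType) (n : nat) (gamma Q : 'M[k]_n).
Hypotheses (hQ : Q \in unitmx) (hg : gamma \in unitmx)
  (hD : is_diag_mx (Q *m gamma *m invmx Q)).
Local Notation Qi := (invmx Q).
Local Notation D := (Q *m gamma *m invmx Q).
Local Notation d a := (D a a).

Lemma QgDQ : Q *m gamma = D *m Q.
Proof. by rewrite mulmxKV. Qed.

Lemma gQiD : gamma *m Qi = Qi *m D.
Proof. by rewrite [RHS]mulmxA mulKmx. Qed.

Lemma rowQg a : row a Q *m gamma = d a *: row a Q.
Proof.
have [r Dr] := diag_mxP _ hD.
have -> : d a = r 0 a by rewrite Dr mxE eqxx mulr1n.
by rewrite -row_mul QgDQ Dr mul_diag_mx; apply/rowP => j; rewrite !mxE.
Qed.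

Lemma gcolQi b : gamma *m col b Qi = d b *: col b Qi.
Proof.
have [r Dr] := diag_mxP _ hD.
have -> : d b = r 0 b by rewrite Dr mxE eqxx mulr1n.
rewrite colE mulmxA gQiD -colE Dr mul_mx_diag; apply/colP => j; rewrite !mxE.
rewrite (bigD1 b) //= big1 ?addr0 => [|j0 /negPf nj]; rewrite !mxE ?eqxx ?nj ?andbT ?mulr1 ?mulr0 //; exact: mulrC.
Qed.

Lemma d_neq0 a : d a != 0.
Proof.
apply/negP => /eqP da0.
have : row a Q *m gamma *m (invmx gamma *m Qi) = row a (1%:M : 'M[k]_n).
  by rewrite mulmxA mulmxK // -row_mul mulmxV.
rewrite rowQg da0 scale0r mul0mx => /rowP /(_ a); rewrite !mxE eqxx /=.
by move/eqP; rewrite eq_sym oner_eq0.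
Qed.

Lemma rowQginv a : row a Q *m invmx gamma = (d a)^-1 *: row a Q.
Proof.
apply: (canRL (scalerK (d_neq0 a))).
by rewrite scalemxAl -rowQg mulmxK.
Qed.

Local Notation P := (Pol k n).
Local Notation sig := (substv (sigH gamma)).

Definition y a b : P := (Cmat n (row a Q) *m Xmat k n *m Cmat n (col b Qi)) ord0 ord0.
Definition Ymx : 'M[P]_n := Cmat n Q *m Xmat k n *m Cmat n Qi.

Lemma form_scale (c c' : k) (u : 'rV[k]_n) (M : 'M[P]_n) (v : 'cV[k]_n) :
  (Cmat n (c *: u) *m M *m Cmat n (c' *: v)) ord0 ord0
  = (c * c') *: (Cmat n u *m M *m Cmat n v) ord0 ord0.
Proof.
rewrite !form_expand scaler_sumr; apply: eq_bigr => b _.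
rewrite scaler_sumr; apply: eq_bigr => a _.
by rewrite !mxE scalerA mulrACA.
Qed.

Lemma sig_y a b : sig (y a b) = (d b / d a) *: y a b.
Proof.
by rewrite /y sig_form rowQginv // gcolQi // form_scale mulrC.
Qed.

Lemma Y_entry a b : Ymx a b = y a b.
Proof.
rewrite /Ymx /y !form_expand; apply: eq_bigr => b' _; apply: eq_bigr => a' _.
by rewrite !mxE.
Qed.

Lemma X_decomp : Xmat k n = Cmat n Qi *m Ymx *m Cmat n Q.
Proof.
rewrite /Ymx !mulmxA -Cmat_mul mulVmx // Cmat1 mul1mx -mulmxA -Cmat_mul mulVmx //.
by rewrite Cmat1 mulmx1.
Qed.

Lemma gen_expand p q (u : 'M[k]_(p, n)) (v : 'M[k]_(n, q)) i j :
  (Cmat n u *m Xmat k n *m Cmat n v) i j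
  = \sum_b \sum_a ((u *m Qi) i a * (Q *m v) b j) *: y a b.
Proof.
rewrite X_decomp !mulmxA -Cmat_mul -!mulmxA -Cmat_mul !mulmxA.
rewrite -[Cmat n (u *m Qi) *m Cmat n Q *m Xmat k n]mulmxA -[Cmat n (u *m Qi) *m (Cmat n Q *m Xmat k n) *m Cmat n Qi]mulmxA -/Ymx form_expand.
by apply: eq_bigr => b _; apply: eq_bigr => a _; rewrite Y_entry.
Qed.

Lemma xv_expand i j : xv k i j = \sum_b \sum_a (Qi i a * Q b j) *: y a b.
Proof.
have -> : xv k i j = Xmat k n i j by rewrite mxE.
rewrite X_decomp form_expand.
by apply: eq_bigr => b _; apply: eq_bigr => a _; rewrite Y_entry.
Qed.

Lemma eig_orth a (v : 'cV[k]_n) c : gamma *m v = c *: v -> c != d a -> row a Q *m v = 0.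
Proof.
move=> gv ne.
have e1 : (d a - c) *: (row a Q *m v) = 0.
  by rewrite scalerBl [d a *: _]scalemxAl -rowQg // -mulmxA gv -scalemxAr subrr.
have : (d a - c)^-1 *: ((d a - c) *: (row a Q *m v)) = 0 by rewrite e1 scaler0.
by rewrite scalerA mulVf ?scale1r // subr_eq0 eq_sym.
Qed.

Lemma rowQ_entry a (v : 'cV[k]_n) : (Q *m v) a ord0 = (row a Q *m v) ord0 ord0.
Proof. by rewrite !mxE; apply: eq_bigr => j _; rewrite !mxE. Qed.

Lemma colQi_entry (u : 'rV[k]_n) b : (u *m Qi) ord0 b = (u *m col b Qi) ord0 ord0.
Proof. by rewrite !mxE; apply: eq_bigr => j _; rewrite !mxE. Qed.

Variable L : k -> Prop.
Hypothesis hL : subgroup_units L.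

Lemma bad_CGL a b : ~ L (d b / d a) -> CGL_gens L gamma (y a b).
Proof.
move=> nL; exists (d b), (col b Qi), (row a Q); split => //.
  exists [:: (d b, col b Qi)]; split; last by rewrite big_seq1.
  move=> p; rewrite inE => /eqP -> /=; split; last exact: gcolQi.
  by exists 1; case: hL => _ L1 _ _; rewrite mulr1.
move=> u [s [Hs ->]]; rewrite mulmx_sumr big1_seq // => p /Hs [[mu [Lmu e1]] e2].
apply: eig_orth e2 _; apply/negP => /eqP eq1; apply: nL.
have hdb := d_neq0 b; rewrite -eq1 e1 invfM mulrA mulfV // mul1r.
by case: hL => _ _ _ Linv; apply: Linv.
Qed.

Lemma cgl_expand g : CGL_gens L gamma g ->
  exists c : 'I_n -> 'I_n -> k,
    (forall a b, c a b != 0 -> ~ L (d b / d a)) /\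
    g = \sum_b \sum_a c a b *: y a b.
Proof.
move=> [lam [w [phi [[s [Hs Hw]] Hphi ->]]]].
exists (fun a b => (phi *m Qi) ord0 a * (Q *m w) b ord0); split; last first.
  exact: gen_expand.
move=> a b; rewrite mulf_eq0 negb_or => /andP [nphi nw] Lab.
have [mu [Lmu dbE]] : exists mu, L mu /\ d b = lam * mu.
  case: (boolP (has (fun p : k * 'cV[k]_n => p.1 == d b) s)).
    move=> /hasP [p ps /eqP pE]; have [[mu [Lmu e1]] _] := Hs p ps.
    by exists mu; rewrite -pE.
  move=> /hasPn nh; move: nw; rewrite rowQ_entry Hw mulmx_sumr big1_seq ?mxE ?eqxx //.
  move=> p ps; have [_ e2] := Hs p ps; apply: (eig_orth e2).
  exact: nh.
have hda := d_neq0 a; have hdb := d_neq0 b.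
case: hL => L0 L1 LM LV.
move: nphi; rewrite colQi_entry Hphi ?mxE ?eqxx //.
exists [:: (d a, col a Qi)]; split; last by rewrite big_seq1.
move=> p; rewrite inE => /eqP -> /=; split; last exact: gcolQi.
exists (mu / (d b / d a)); split; first by apply: LM => //; apply: LV.
by rewrite mulrA -dbE invfM invrK mulrA mulfV // mul1r.
Qed.

Lemma igZ (S : P -> Prop) (c : k) f : ideal_gen S f -> ideal_gen S (c *: f).
Proof. by rewrite -mul_mpolyC; apply: igM. Qed.

Lemma sigZ c (f : P) : sig (c *: f) = c *: sig f.
Proof. exact: substvZ. Qed.

Definition Eg (e : P) := exists s : seq (k * P),
  (forall p, p \in s -> L p.1 /\ sig p.2 = p.1 *: p.2) /\ e = \sum_(p <- s) p.2.

Lemma E0 : Eg 0.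
Proof. by exists [::]; rewrite big_nil. Qed.

Lemma Eeig c (x : P) : L c -> sig x = c *: x -> Eg x.
Proof.
move=> Lc sx; exists [:: (c, x)]; split; last by rewrite big_seq1.
by move=> p; rewrite inE => /eqP ->.
Qed.

Lemma ED e1 e2 : Eg e1 -> Eg e2 -> Eg (e1 + e2).
Proof.
move=> [s [Hs ->]] [t [Ht ->]]; exists (s ++ t); split; last by rewrite big_cat.
by move=> p; rewrite mem_cat => /orP [/Hs|/Ht].
Qed.

Lemma Esum (I0 : eqType) (r : seq I0) (F : I0 -> P) :
  (forall i, i \in r -> Eg (F i)) -> Eg (\sum_(i <- r) F i).
Proof.
elim: r => [|a r IH] H; first by rewrite big_nil; apply: E0.
rewrite big_cons; apply: ED; first by apply: H; rewrite inE eqxx.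
by apply: IH => i Hi; apply: H; rewrite inE Hi orbT.
Qed.

Lemma eigM c c' (x x' : P) : sig x = c *: x -> sig x' = c' *: x' ->
  sig (x * x') = (c * c') *: (x * x').
Proof. by move=> e e'; rewrite substvM e e' -scalerAl -scalerAr scalerA. Qed.

Lemma EM1 c (x : P) e : L c -> sig x = c *: x -> Eg e -> Eg (x * e).
Proof.
move=> Lc sx [s [Hs ->]]; rewrite mulr_sumr; apply: Esum => p /Hs [Lp sp].
apply: (Eeig (c := c * p.1)); last exact: eigM.
by case: hL => _ _ LM _; apply: LM.
Qed.

Lemma EM e1 e2 : Eg e1 -> Eg e2 -> Eg (e1 * e2).
Proof.
move=> [s [Hs ->]] He2; rewrite mulr_suml; apply: Esum => p /Hs [Lp sp].
exact: EM1 Lp sp He2.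
Qed.

Lemma EZ c e : Eg e -> Eg (c *: e).
Proof.
move=> [s [Hs ->]]; rewrite scaler_sumr; apply: Esum => p /Hs [Lp sp].
by apply: (Eeig Lp); rewrite sigZ sp !scalerA mulrC.
Qed.

Lemma E1 : Eg 1.
Proof.
apply: (Eeig (c := 1)); first by case: hL.
by rewrite substv1 scale1r.
Qed.

Variable I : P -> Prop.
Hypothesis hI : is_ideal I.
Hypothesis hIs : forall f, I f -> I (sig f).

Definition Kg := ideal_gen (fun g => I g \/ exists a b, ~ L (d b / d a) /\ g = y a b).

Lemma K_sig f : Kg f -> Kg (sig f).
Proof.
move=> [s [Hs ->]]; rewrite substv_sum; apply: ig_sum => p /Hs Hp.
rewrite substvM; apply: igM; case: Hp => [Ig | [a [b [nL ->]]]].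
  by apply: ig_gen; left; apply: hIs.
by rewrite sig_y; apply: igZ; apply: ig_gen; right; exists a, b.
Qed.

Definition Dec (f : P) := exists g e, Kg g /\ Eg e /\ f = g + e.

Lemma Dec0 : Dec 0.
Proof. by exists 0, 0; split; [apply: ig0 | split; [apply: E0 | rewrite addr0]]. Qed.

Lemma DecK f : Kg f -> Dec f.
Proof. by exists f, 0; split => //; split; [apply: E0 | rewrite addr0]. Qed.

Lemma DecE f : Eg f -> Dec f.
Proof. by exists 0, f; split; [apply: ig0 | split => //; rewrite add0r]. Qed.

Lemma DecD f f' : Dec f -> Dec f' -> Dec (f + f').
Proof.
move=> [g [e [Kg1 [Ee ->]]]] [g' [e' [Kg' [Ee' ->]]]].
exists (g + g'), (e + e'); split; first exact: igD.
by split; [apply: ED | rewrite addrACA].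
Qed.

Lemma DecZ c f : Dec f -> Dec (c *: f).
Proof.
move=> [g [e [Kg1 [Ee ->]]]]; exists (c *: g), (c *: e); split; first exact: igZ.
by split; [apply: EZ | rewrite scalerDr].
Qed.

Lemma DecM f f' : Dec f -> Dec f' -> Dec (f * f').
Proof.
move=> [g [e [Kg1 [Ee ->]]]] [g' [e' [Kg' [Ee' ->]]]].
exists (g * (g' + e') + e * g'), (e * e'); split.
  by apply: igD; [rewrite mulrC | ]; apply: igM.
by split; [apply: EM | rewrite mulrDl [e * _]mulrDr addrA].
Qed.

Lemma Dec_sum (I0 : eqType) (r : seq I0) (F : I0 -> P) :
  (forall i, i \in r -> Dec (F i)) -> Dec (\sum_(i <- r) F i).
Proof.
elim: r => [|a r IH] H; first by rewrite big_nil; apply: Dec0.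
rewrite big_cons; apply: DecD; first by apply: H; rewrite inE eqxx.
by apply: IH => i Hi; apply: H; rewrite inE Hi orbT.
Qed.

Lemma Dec_var v : Dec (var k v).
Proof.
case: v => [[i j]|].
  rewrite -/(xv k i j) xv_expand; apply: Dec_sum => b _; apply: Dec_sum => a _.
  apply: DecZ.
  case: (classic (L (d b / d a))).
    move=> Lab; apply: DecE; apply: (Eeig Lab); exact: sig_y.
  move=> nL; apply: DecK; apply: ig_gen; right; by exists a, b.
apply: DecE; apply: (Eeig (c := 1)); first by case: hL.
by rewrite substv_var scale1r.
Qed.

Lemma Dec_all f : Dec f.
Proof.
elim/mpolyind: f => [|c m p _ _ Hp]; first exact: Dec0.
apply: DecD => //; apply: DecZ; rewrite mpolyXE_id.
apply: (big_ind Dec) => [|x x'|i _]; first exact: (DecE E1).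
  exact: DecM.
have -> : 'X_i = var k (enum_val i) by rewrite /var enum_valK.
elim: (m i) => [|j IH]; first by rewrite expr0; apply: (DecE E1).
by rewrite exprS; apply: DecM => //; apply: Dec_var.
Qed.

Lemma K_eig_sum lam (s : seq (k * P)) :
  (forall p, p \in s -> p.1 != lam /\ sig p.2 = p.1 *: p.2) ->
  Kg (sig (\sum_(p <- s) p.2) - lam *: \sum_(p <- s) p.2) ->
  Kg (\sum_(p <- s) p.2).
Proof.
move: {2}(size s) (erefl (size s)) => N; elim: N s => [|N IH] [|p s] //= sz Hs HK;
  first by rewrite big_nil; apply: ig0.
move: HK; set e := \sum_(q <- p :: s) q.2 => HK.
have [np sp] := Hs p (mem_head _ _).
pose s' := [seq (q.1, (q.1 - p.1) *: q.2) | q <- s].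
have He : \sum_(q <- s') q.2 = sig e - p.1 *: e.
  rewrite /e big_cons substvD sp big_map substv_sum scalerDr scaler_sumr.
  rewrite opprD addrACA subrr add0r -sumrB big_seq [RHS]big_seq.
  apply: eq_bigr => q qs; have := Hs q; rewrite inE qs orbT => /(_ isT) [_ sq].
  by rewrite sq -scalerBl.
have HKs : Kg (sig e - p.1 *: e).
  rewrite -He; apply: IH; first by rewrite size_map; case: sz.
    move=> q /mapP [q0 q0s ->] /=.
    have := Hs q0; rewrite inE q0s orbT => /(_ isT) [nq sq]; split => //.
    by rewrite sigZ sq !scalerA mulrC.
  rewrite He.
  have -> : sig (sig e - p.1 *: e) - lam *: (sig e - p.1 *: e)
          = sig (sig e - lam *: e) - p.1 *: (sig e - lam *: e).
    by rewrite !substvB !sigZ !scalerBr !scalerA mulrC grp4.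
  by apply: igB; [apply: K_sig | apply: igZ].
have : Kg ((sig e - p.1 *: e) - (sig e - lam *: e)) by apply: igB.
rewrite grp3 -scalerBl => /(igZ (lam - p.1)^-1).
by rewrite scalerA mulVf ?scale1r // subr_eq0 eq_sym.
Qed.

End Diag.

Theorem proposition4p13 (k : fieldType) (n : nat) (I : Pol k n -> Prop)
    (gamma : 'M[k]_n) (L : k -> Prop) :
  closed_subgroup_ideal I ->
  normalises gamma I ->
  diagonalizable gamma ->
  subgroup_units L ->
  forall f : Pol k n,
    ideal_gen (fun g => I g \/ CGL_gens L gamma g) f <->
    ideal_gen (fun g => I g \/ eigvec_outside L gamma I g) f.
Proof.
move=> [hI _ _ _ _] [hg hIs] [Q hQ hD] hL f.
have hD2 : is_diag_mx (conjmx Q gamma) := hD. rewrite conjumx // in hD2.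
have hIs' : forall g, I g -> I (substv (sigH gamma) g).
  by move=> g /hIs [+ _]; rewrite conj_actE.
have I0 : I 0 by case: hI.
split.
  apply: ig_trans => g [Ig | Cg]; first by apply: ig_gen; left.
  have [c [Hc ->]] := cgl_expand hQ hg hD2 hL Cg.
  apply: ig_sum => b _; apply: ig_sum => a _.
  have [->|nc] := eqVneq (c a b) 0; first by rewrite scale0r; apply: ig0.
  apply: igZ; have nL := Hc a b nc.
  case: (classic (I (y Q a b))) => Iy; first by apply: ig_gen; left.
  apply: ig_gen; right; exists ((Q *m gamma *m invmx Q) b b / (Q *m gamma *m invmx Q) a a).
  split; [exact: nL | exact: Iy | ].
  by rewrite conj_actE sig_y // subrr.
apply: ig_trans => g Hg.
suff : Kg gamma Q L I g.
  apply: ig_trans => h [Ih | [a [b [nL ->]]]]; apply: ig_gen; first by left.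
  by right; apply: (bad_CGL hQ hg hD2 hL).
case: Hg => [Ig | [lam [nL nI Hl]]]; first by apply: ig_gen; left.
have [g0 [e [Kg0 [[s [Hs Es]] Eg0]]]] := Dec_all hQ hg hD2 hL I g.
rewrite Eg0 in Hl *.
apply: igD; first exact: Kg0.
rewrite Es; apply: (K_eig_sum hQ hg hD2 hIs' (lam := lam)).
  move=> p /Hs [Lp sp]; split; last exact: sp.
  apply/negP => /eqP E; apply: nL; rewrite -E; exact: Lp.
rewrite -Es -(grp5 (substv (sigH gamma) g0) _ (lam *: g0)) -substvD -scalerDr.
apply: igB; first by apply: ig_gen; left; rewrite -conj_actE.
by apply: igB; [apply: (K_sig hQ hg hD2 hIs') | apply: igZ].
Qed.
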